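(* Let $X$ and $Y$ be continuous random variables with marginal distribution functions $F_1,F_2$ and copula $C$, and suppose $Y=f(X)$ almost surely, where $f$ is a periodic function, continuous and differentiable over the range of $X$. Let $M(u,v)=\min(u,v)$, $W(u,v)=\max(u+v-1,0)$, $\Pi(u,v)=uv$. Then at every global maximum point $(x_1,y_{\max})$ of $f$, with $u_1=F_1(x_1)$, $v_1=F_2(y_{\max})$, one has $C(u_1,v_1)=M(u_1,v_1)=W(u_1,v_1)=\Pi(u_1,v_1)=u_1$, and at every global minimum point $(x_2,y_{\min})$ of $f$, with $u_2=F_1(x_2)$, $v_2=F_2(y_{\min})$, one has $C(u_2,v_2)=M(u_2,v_2)=W(u_2,v_2)=\Pi(u_2,v_2)=0$.
   Context: The copula $C$ of continuous random variables $X,Y$ with joint distribution $H$ and marginals $F_1,F_2$ is the unique function $C:[0,1]^2\to[0,1]$ with $H(x,y)=P(X\le x,Y\le y)=C(F_1(x),F_2(y))$. *)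

(* Defs.v *)
From HB Require Import structures.
From mathcomp Require Import all_boot all_order all_algebra.
From mathcomp Require Import all_classical all_reals all_analysis.
Set Implicit Arguments. Unset Strict Implicit. Unset Printing Implicit Defensive.
Import Order.TTheory GRing.Theory Num.Theory.
Import numFieldNormedType.Exports.
Local Open Scope classical_set_scope.
Local Open Scope ring_scope.

(* real-valued distribution function F(x) = P(X <= x) (library [cdf] is \bar R-valued) *)
Definition dfun d (T : measurableType d) (R : realType) (P : probability T R)
  (X : {RV P >-> R}) (x : R) : R := fine (cdf X x).

Definition joint_dfun d (T : measurableType d) (R : realType) (P : probability T R)
  (X Y : {RV P >-> R}) (x y : R) : R :=
  fine (P ([set w | X w <= x] `&` [set w | Y w <= y])).

Definition continuous_RV d (T : measurableType d) (R : realType) (P : probability T R)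
  (X : {RV P >-> R}) : Prop := continuous (dfun X).

(* (bivariate) copula: a function [0,1]^2 -> [0,1] (values outside [0,1]^2 are irrelevant),
   grounded, with uniform margins, and 2-increasing *)
Definition copula (R : realType) (C : R -> R -> R) : Prop :=
  [/\ (forall u v, 0 <= u <= 1 -> 0 <= v <= 1 -> 0 <= C u v <= 1),
      (forall u, 0 <= u <= 1 -> C u 0 = 0 /\ C 0 u = 0),
      (forall u, 0 <= u <= 1 -> C u 1 = u /\ C 1 u = u) &
      (forall u1 u2 v1 v2, 0 <= u1 -> u1 <= u2 -> u2 <= 1 ->
          0 <= v1 -> v1 <= v2 -> v2 <= 1 ->
          0 <= C u2 v2 - C u2 v1 - C u1 v2 + C u1 v1)].

Definition copula_of d (T : measurableType d) (R : realType) (P : probability T R)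
  (X Y : {RV P >-> R}) (C : R -> R -> R) : Prop :=
  copula C /\ forall x y : R, joint_dfun X Y x y = C (dfun X x) (dfun Y y).

Definition Mcop (R : realType) (u v : R) : R := Num.min u v.
Definition Wcop (R : realType) (u v : R) : R := Num.max (u + v - 1) 0.
Definition Picop (R : realType) (u v : R) : R := u * v.

(* Main.v *)
Require Import Defs.
From HB Require Import structures.
From mathcomp Require Import all_boot all_order all_algebra.
From mathcomp Require Import all_classical all_reals all_analysis.
Import Order.TTheory GRing.Theory Num.Theory.
Import numFieldNormedType.Exports.
Local Open Scope classical_set_scope.
Local Open Scope ring_scope.

Lemma dfun01 d (T : measurableType d) (R : realType) (P : probability T R)
  (X : {RV P >-> R}) x : 0 <= dfun X x <= 1.
Proof.
rewrite /dfun; have h0 := cdf_ge0 X x; have h1 := cdf_le1 X x.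
by move: h0 h1; case: (cdf X x) => [r| |] //=; rewrite !lee_fin => -> ->.
Qed.

Lemma dfun_max d (T : measurableType d) (R : realType) (P : probability T R)
  (X Y : {RV P >-> R}) (f : R -> R) x1 :
  {ae P, forall w, Y w = f (X w)} -> (forall x, f x <= f x1) ->
  dfun Y (f x1) = 1.
Proof.
move=> [N [mN PN0 HN]] hmax.
have sub : ~` N `<=` Y @^-1` `]-oo, f x1].
  move=> w Nw /=; rewrite in_itv /=.
  have -> : Y w = f (X w) by apply: contrapT => H; apply: Nw; exact: HN.
  exact: hmax.
have mA : measurable (Y @^-1` `]-oo, f x1]) by exact: measurable_funPTI.
have h1 : (1 <= P (Y @^-1` `]-oo, f x1]))%E.
  have := le_measure P; move=> /(_ (~` N) (Y @^-1` `]-oo, f x1])).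
  have e1 : P (~` N) = 1%E by rewrite probability_setC // PN0 sube0.
  rewrite -e1 => H; apply: H; rewrite ?inE //.
  exact: measurableC.
have h2 := probability_le1 P mA.
rewrite /dfun /cdf /distribution /pushforward.
by have -> : P (Y @^-1` `]-oo, f x1]) = 1%E by apply/eqP; rewrite eq_le h1 h2.
Qed.

Lemma dfun_min d (T : measurableType d) (R : realType) (P : probability T R)
  (X Y : {RV P >-> R}) (f : R -> R) x2 :
  continuous_RV Y ->
  {ae P, forall w, Y w = f (X w)} -> (forall x, f x2 <= f x) ->
  dfun Y (f x2) = 0.
Proof.
move=> cY [N [mN PN0 HN]] hmin.
have H0 : forall x, x < f x2 -> dfun Y x = 0.
  move=> x xlt.
  have sub : Y @^-1` `]-oo, x] `<=` N.
    move=> w /=; rewrite in_itv /= => Yw; apply: contrapT => Nw.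
    have e : Y w = f (X w) by apply: contrapT => H; apply: Nw; exact: HN.
    have := hmin (X w); rewrite -e => h.
    by have := lt_le_trans xlt (le_trans h Yw); rewrite ltxx.
  have mA : measurable (Y @^-1` `]-oo, x]) by exact: measurable_funPTI.
  have h1 : (P (Y @^-1` `]-oo, x]) <= 0)%E.
    by rewrite -PN0; apply: le_measure; rewrite ?inE.
  rewrite /dfun /cdf /distribution /pushforward.
  have -> : P (Y @^-1` `]-oo, x]) = 0%E.
    by apply/eqP; rewrite eq_le h1 measure_ge0.
  by [].
set y := f x2.
have [h0 _] := andP (@dfun01 _ _ _ P Y y).
apply/eqP; rewrite eq_le h0 andbT; rewrite leNgt; apply/negP => ypos.
have := cY y; move/cvgrPdist_lt => /(_ _ ypos) /nbhs_ballP [e /= e0 He].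
have hb : ball y e (y - e / 2).
  rewrite /ball /= opprB addrC subrK ger0_norm ?divr_ge0 ?ltW //.
  by rewrite ltr_pdivrMr // ltr_pMr // ltr1n.
have hlt : y - e / 2 < y by rewrite ltrBlDl ltrDr divr_gt0.
by have := He _ hb; rewrite /= (H0 _ hlt) subr0 ger0_norm // ltxx.
Qed.
Theorem corollary1 (d : measure_display) (T : measurableType d) (R : realType)
  (P : probability T R) (X Y : {RV P >-> R}) (C : R -> R -> R) (f : R -> R) :
  continuous_RV X -> continuous_RV Y ->
  copula_of X Y C ->
  {ae P, forall w, Y w = f (X w)} ->
  (exists p : R, 0 < p /\ periodic f p) ->
  (forall w, {for X w, continuous f} /\ derivable f (X w) 1) ->
  (forall x1 : R, (forall x, f x <= f x1) ->
     let u1 := dfun X x1 in let v1 := dfun Y (f x1) in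
     [/\ C u1 v1 = Mcop u1 v1, Mcop u1 v1 = Wcop u1 v1,
         Wcop u1 v1 = Picop u1 v1 & Picop u1 v1 = u1]) /\
  (forall x2 : R, (forall x, f x2 <= f x) ->
     let u2 := dfun X x2 in let v2 := dfun Y (f x2) in
     [/\ C u2 v2 = Mcop u2 v2, Mcop u2 v2 = Wcop u2 v2,
         Wcop u2 v2 = Picop u2 v2 & Picop u2 v2 = 0]).
Proof.
move=> _ cY [[_ Cg Cm _] _] ae _ _; split.
- move=> x1 hmax /=; rewrite (@dfun_max _ _ _ P X Y f x1 ae hmax).
  have /andP[u0 u1] := @dfun01 _ _ _ P X x1.
  have [-> _] := Cm _ (@dfun01 _ _ _ P X x1).
  rewrite /Mcop /Wcop /Picop mulr1 addrK.
  rewrite (min_idPl u1) (max_idPl u0); split => //.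
- move=> x2 hmin /=; rewrite (@dfun_min _ _ _ P X Y f x2 cY ae hmin).
  have /andP[u0 u1] := @dfun01 _ _ _ P X x2.
  have [-> _] := Cg _ (@dfun01 _ _ _ P X x2).
  rewrite /Mcop /Wcop /Picop mulr0 addr0 (min_idPr u0).
  have -> : Num.max (dfun X x2 - 1) 0 = 0 by apply/max_idPr; rewrite subr_le0.
  by split.
Qed.
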